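(* Let $H$ be a homogeneous elliptic operator of order $2m$ with real constant coefficients on $\mathbb{R}^n$ and let $\Omega\subseteq\mathbb{R}^n$ be an open convex set with nonempty boundary. Then for every $x\in\Omega$, $$\int_{S^{n-1}}\frac{d\sigma(\omega)}{\big(F_H^*(\omega)\,d_\omega(x)\big)^{2m}}\ \ge\ \frac{\mu_H}{d_H^{2m}(x)}.$$
   Context: $H$ has symbol $H(\xi)=\sum_{|\alpha|=2m}a_\alpha\xi^\alpha$, real $a_\alpha$, $H(\xi)>0$ for $\xi\ne0$. $F_H(\xi)=H(\xi)^{1/(2m)}$, $F_H^*(\omega)=\sup_{\xi\neq0}\frac{\omega\cdot\xi}{F_H(\xi)}$, $F_H^{**}(\xi)=\sup_{\omega\neq0}\frac{\xi\cdot\omega}{F_H^*(\omega)}$. $d_\omega(x)=\inf\{|s|:x+s\omega\notin\Omega\}$ and $d_H(x)=\min\{F_H^*(x-y):y\in\partial\Omega\}$. $d\sigma$ is the normalized surface measure on $S^{n-1}$, and $\mu_H$ is the largest constant such that $\mu_H F_H^{**}(\xi)^{2m}\le\int_{S^{n-1}}\frac{(\xi\cdot\omega)^{2m}}{F_H^*(\omega)^{2m}}d\sigma(\omega)$ for all $\xi\in\mathbb{R}^n$. *)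

(* Defs.v *)
From HB Require Import structures.
From mathcomp Require Import all_boot all_order all_algebra.
From mathcomp Require Import all_classical all_reals all_analysis.
Set Implicit Arguments. Unset Strict Implicit. Unset Printing Implicit Defensive.
Import Order.TTheory GRing.Theory Num.Theory.
Import numFieldNormedType.Exports.
Local Open Scope classical_set_scope.
Local Open Scope ring_scope.

Section Defs.
Variable R : realType.
Variable n : nat.
Implicit Types (x y xi om : 'rV[R]_n) (A : set 'rV[R]_n).

Definition dotp x y : R := \sum_(i < n) x ord0 i * y ord0 i.
Definition enorm x : R := Num.sqrt (dotp x x).

Definition sphere : set 'rV[R]_n := [set om | enorm om = 1].
Definition ball1 : set 'rV[R]_n := [set x | enorm x <= 1].

(* multi-indices alpha with |alpha| = 2m (entries bounded by 2m) *)
Definition multiidx (m : nat) := {ffun 'I_n -> 'I_(2 * m).+1}.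

Definition Hsym (m : nat) (a : multiidx m -> R) xi : R :=
  \sum_(al : multiidx m | (\sum_(i < n) (al i : nat) == 2 * m)%N)
     a al * \prod_(i < n) xi ord0 i ^+ (al i : nat).

Definition FH m (a : multiidx m -> R) xi : R := powR (Hsym a xi) ((2 * m)%:R)^-1.

Definition FHstar m (a : multiidx m -> R) om : R :=
  sup [set dotp om xi / FH a xi | xi in [set xi | xi != 0]].

Definition FHstarstar m (a : multiidx m -> R) xi : R :=
  sup [set dotp xi om / FHstar a om | om in [set om | om != 0]].

(* Iterated Lebesgue integral over R^k of a nonnegative extended function of
   the coordinates (Tonelli: equals the Lebesgue integral on R^k). *)
Fixpoint iter_int (k : nat) (f : (nat -> R) -> \bar R) : \bar R :=
  match k with
  | 0 => f (fun _ => 0)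
  | k'.+1 => (\int[@lebesgue_measure R]_(t in [set: R])
                iter_int k' (fun v => f (fun i => if i == k' then t else v i)))%E
  end.

Definition leb_int (F : 'rV[R]_n -> \bar R) : \bar R :=
  iter_int n (fun v => F (\row_(i < n) v i)).

Definition vol_ball : \bar R := leb_int (fun x => (\1_ball1 x)%:E).

(* Integral over S^{n-1} w.r.t. the normalized surface measure d sigma,
   via the cone formula: int_S f dsigma = |B|^{-1} int_B f(x/|x|) dx. *)
Definition sphere_int (f : 'rV[R]_n -> \bar R) : \bar R :=
  (leb_int (fun x => (\1_ball1 x)%:E * f ((enorm x)^-1 *: x)) * (fine vol_ball)^-1%:E)%E.

Definition muH m (a : multiidx m -> R) : R :=
  sup [set c : R | forall xi,
        ((c * FHstarstar a xi ^+ (2 * m))%:E <=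
         sphere_int (fun om => (dotp xi om ^+ (2 * m) / FHstar a om ^+ (2 * m))%:E))%E].

Definition bdry A : set 'rV[R]_n := closure A `&` closure (~` A).

(* d_om(x) = inf{|s| : x + s om notin Omega}  (+oo if the set is empty) *)
Definition d_dir A x om : \bar R :=
  ereal_inf [set (`|s|)%:E | s in [set s : R | ~ A (x + s *: om)]].

Definition dH m (a : multiidx m -> R) A x : R :=
  inf [set FHstar a (x - y) | y in bdry A].

Definition integrand m (a : multiidx m -> R) A x om : \bar R :=
  match d_dir A x om with
  | EFin r => ((FHstar a om * r) ^+ (2 * m))^-1%:E
  | _ => 0%E
  end.

End Defs.

(* Main.v *)
Require Import Defs.
From HB Require Import structures.
From mathcomp Require Import all_boot all_order all_algebra.
From mathcomp Require Import all_classical all_reals all_analysis.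
From mathcomp Require Import lra.
Set Implicit Arguments. Unset Strict Implicit. Unset Printing Implicit Defensive.
Import Order.TTheory GRing.Theory Num.Theory.
Import numFieldNormedType.Exports.
Local Open Scope classical_set_scope.
Local Open Scope ring_scope.
Section HB.
Variables (R : realType) (V : lmodType R) (p : V -> R).
Hypothesis pD : forall u v, p (u + v) <= p u + p v.
Hypothesis pZ : forall (t : R) u, 0 < t -> p (t *: u) = t * p u.

Definition subsp (S : set V) := S 0 /\ (forall u v, S u -> S v -> S (u + v)) /\
  (forall (t : R) u, S u -> S (t *: u)).
Definition linon (S : set V) (f : V -> R) :=
  (forall u v, S u -> S v -> f (u + v) = f u + f v) /\
  (forall (t : R) u, S u -> f (t *: u) = t * f u).
Definition ext (S : set V) (e : V) := [set u | exists v t, S v /\ u = v + t *: e].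

Lemma subsp_ext S e : subsp S -> subsp (ext S e).
Proof.
move=> [S0 [SD SZ]]; split; first by exists 0, 0; rewrite scale0r addr0.
split.
  move=> _ _ [v [t [Sv ->]]] [v' [t' [Sv' ->]]]; exists (v + v'), (t + t'); split; first exact: SD.
  by rewrite scalerDl addrACA.
move=> s _ [v [t [Sv ->]]]; exists (s *: v), (s * t); split; first exact: SZ.
by rewrite scalerDr scalerA.
Qed.

Lemma sub_ext S e : S `<=` ext S e.
Proof. by move=> u Su; exists u, 0; rewrite scale0r addr0. Qed.

Lemma mem_ext S e : subsp S -> ext S e e.
Proof. by move=> [S0 _]; exists 0, 1; rewrite scale1r add0r. Qed.

Lemma subspB S u v : subsp S -> S u -> S v -> S (u - v).
Proof.
move=> [_ [SD SZ]] Su Sv; rewrite -scaleN1r; apply: SD => //; exact: SZ.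
Qed.

Lemma ext_c S f e c : subsp S -> linon S f -> ~ S e ->
  (forall v, S v -> f v <= p v) ->
  (forall v, S v -> f v - p (v - e) <= c) ->
  (forall v, S v -> c <= p (v + e) - f v) ->
  exists g, [/\ linon (ext S e) g, (forall u, S u -> g u = f u), g e = c &
    forall u, ext S e u -> g u <= p u].
Proof.
move=> sS [fD fZ] nSe fp cl cu.
have [S0 [SD SZ]] := sS.
pose tc u := xget 0 [set t : R | S (u - t *: e)].
have uniq u t t' : S (u - t *: e) -> S (u - t' *: e) -> t = t'.
  move=> h h'; apply/eqP; apply/negPn/negP => tt'.
  apply: nSe; have := subspB sS h' h.
  have -> : u - t' *: e - (u - t *: e) = (t - t') *: e by rewrite scalerBl opprB addrC addrA subrK addrC.
  move=> /(SZ ((t - t')^-1)).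
  by rewrite scalerA mulVf ?scale1r // subr_eq0.
have tcE u t : S (u - t *: e) -> tc u = t.
  move=> h; apply: (uniq u) => //; apply: (xgetPex 0 (P := [set t : R | S (u - t *: e)])).
  by exists t.
pose g u := f (u - tc u *: e) + tc u * c.
have gE v t : S v -> g (v + t *: e) = f v + t * c.
  by move=> Sv; rewrite /g (tcE _ t) ?addrK.
have f0 : f 0 = 0 by rewrite -(scale0r 0) fZ // mul0r.
exists g; split.
- split.
    move=> _ _ [v [t [Sv ->]]] [v' [t' [Sv' ->]]].
    rewrite addrACA -scalerDl !gE //; last exact: SD.
    by rewrite fD // mulrDl addrACA.
  move=> s _ [v [t [Sv ->]]]; rewrite scalerDr scalerA !gE //; last exact: SZ.
  by rewrite fZ // mulrDr mulrA.
  - by move=> u Su; have := gE u 0 Su; rewrite scale0r addr0 mul0r addr0.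
- by have := gE 0 1 S0; rewrite scale1r add0r f0 mul1r add0r.
- move=> _ [v [t [Sv ->]]]; rewrite gE //.
  have [t0|t0|->] := ltgtP t 0; last by rewrite mul0r addr0 scale0r addr0; exact: fp.
  + have [s s0 ->] : exists2 s, 0 < s & t = - s by exists (- t); rewrite ?oppr_gt0 ?opprK.
    have := cl (s^-1 *: v) (SZ _ _ Sv); rewrite fZ //.
    have -> : s^-1 *: v - e = s^-1 *: (v + (- s) *: e).
      by rewrite scalerDr scalerA mulrN mulVf ?gt_eqF // scaleN1r.
    rewrite pZ ?invr_gt0 // -mulrBr => h.
    rewrite -(ler_pM2l s0) mulrA mulfV ?gt_eqF // mul1r in h.
    lra.
  + have := cu (t^-1 *: v) (SZ _ _ Sv); rewrite fZ //.
    have -> : t^-1 *: v + e = t^-1 *: (v + t *: e).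
      by rewrite scalerDr scalerA mulVf ?gt_eqF // scale1r.
    rewrite pZ ?invr_gt0 // -mulrBr => h.
    rewrite -(ler_pM2l t0) mulrA mulfV ?gt_eqF // mul1r in h.
    lra.
Qed.

Lemma hb_step S f e : subsp S -> linon S f -> (forall v, S v -> f v <= p v) ->
  exists g, [/\ linon (ext S e) g, (forall u, S u -> g u = f u) &
    forall u, ext S e u -> g u <= p u].
Proof.
move=> sS lf fp; have [S0 [SD SZ]] := sS; have [fD fZ] := lf.
case: (pselect (S e)) => Se.
  have sub : ext S e `<=` S.
    by move=> _ [v [t [Sv ->]]]; apply: SD => //; exact: SZ.
  exists f; split => //; last by move=> u /sub; exact: fp.
  split; first by move=> u v /sub Su /sub Sv; exact: fD.
  by move=> t u /sub Su; exact: fZ.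
pose A := [set f v - p (v - e) | v in S].
have key v v' : S v -> S v' -> f v - p (v - e) <= p (v' + e) - f v'.
  move=> Sv Sv'.
  have h1 := fp _ (SD _ _ Sv Sv'); rewrite fD // in h1.
  have h2 := pD (v - e) (v' + e).
  rewrite (_ : v - e + (v' + e) = v + v') in h2; last by rewrite addrACA addNr addr0.
  lra.
have [c [cl cu]] : exists c, (forall v, S v -> f v - p (v - e) <= c) /\
    (forall v, S v -> c <= p (v + e) - f v).
  exists (sup A); split.
    move=> v Sv; apply: (ub_le_sup); last by exists v.
    by exists (p (0 + e) - f 0) => _ [v' Sv' <-]; exact: key.
  move=> v Sv; apply: ge_sup; first by exists (f 0 - p (0 - e)), 0.
  by move=> _ [v' Sv' <-]; exact: key.
have [g [lg gf _ gp]] := ext_c sS lf Se fp cl cu.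
by exists g.
Qed.

Lemma subsp_foldl es S : subsp S -> subsp (foldl ext S es).
Proof. by elim: es S => [|e es IH] S sS //=; apply: IH; exact: subsp_ext. Qed.

Lemma sub_foldl es S : S `<=` foldl ext S es.
Proof.
elim: es S => [|e es IH] S //= u Su; apply: IH; exact: sub_ext.
Qed.

Lemma mem_foldl es S e : subsp S -> e \in es -> foldl ext S es e.
Proof.
elim: es S => [|e' es IH] S sS //=; rewrite in_cons => /orP[/eqP->|ees].
  by apply: sub_foldl; exact: mem_ext.
by apply: IH => //; exact: subsp_ext.
Qed.

Lemma hb_list es S f : subsp S -> linon S f -> (forall v, S v -> f v <= p v) ->
  exists g, [/\ linon (foldl ext S es) g, (forall u, S u -> g u = f u) &
    forall u, foldl ext S es u -> g u <= p u].
Proof.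
elim: es S f => [|e es IH] S f sS lf fp /=; first by exists f.
have [g [lg gf gp]] := hb_step e sS lf fp.
have [h [lh hg hp]] := IH _ _ (subsp_ext e sS) lg gp.
exists h; split => // u Su; rewrite hg ?gf //; exact: sub_ext.
Qed.

End HB.
Arguments ext {R V}.
Arguments subsp {R V}.
Arguments linon {R V}.

Section Gauge.
Variables (R : realType) (V : normedModType R) (U : set V).
Hypothesis hU : forall u, U u -> exists2 e : R, 0 < e & forall y, `|u - y| < e -> U y.
Hypothesis cU : forall a b (l : R), 0 <= l -> l <= 1 -> U a -> U b -> U (l *: a + (1 - l) *: b).
Hypothesis U0 : U 0.

Definition gE (u : V) := [set t : R | 0 < t /\ U (t^-1 *: u)].
Definition gauge (u : V) := inf (gE u).

Lemma gE_n0 u : gE u !=set0.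
Proof.
have [e e0 He] := hU U0.
exists ((`|u| + 1) / e); split; first by rewrite divr_gt0 // ltr_pwDr.
apply: He; rewrite sub0r normrN normrZ invf_div ger0_norm; last by rewrite divr_ge0 // ?ltW // ltr_pwDr.
rewrite mulrAC ltr_pdivrMr ?ltr_pwDr // ltr_pM2l //; lra.
Qed.

Lemma gE_lb u : has_lbound (gE u).
Proof. by exists 0 => t [/ltW]. Qed.

Lemma gauge_ge0 u : 0 <= gauge u.
Proof. by apply: lb_le_inf; [exact: gE_n0 | move=> t [/ltW]]. Qed.

Lemma gauge_le u t : gE u t -> gauge u <= t.
Proof. by move=> h; apply: ge_inf => //; exact: gE_lb. Qed.

Lemma gaugeZ_le (t : R) u : 0 < t -> gauge (t *: u) <= t * gauge u.
Proof.
move=> t0; rewrite -ler_pdivrMl //; apply: lb_le_inf; first exact: gE_n0.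
move=> s [s0 Us]; rewrite ler_pdivrMl //; apply: gauge_le; split; first exact: mulr_gt0.
by rewrite scalerA invfM mulrAC mulVf ?gt_eqF // mul1r.
Qed.

Lemma gaugeZ (t : R) u : 0 < t -> gauge (t *: u) = t * gauge u.
Proof.
move=> t0; apply/eqP; rewrite eq_le gaugeZ_le //=.
have ti : 0 < t^-1 by rewrite invr_gt0.
have := gaugeZ_le (t *: u) ti; rewrite scalerA mulVf ?gt_eqF // scale1r.
by rewrite -ler_pdivrMl ?invr_gt0 // invrK.
Qed.

Lemma gaugeD u v : gauge (u + v) <= gauge u + gauge v.
Proof.
have key a b : gE u a -> gE v b -> gauge (u + v) <= a + b.
  move=> [a0 Ua] [b0 Ub]; apply: gauge_le; split; first exact: addr_gt0.
  have ab0 : 0 < a + b := addr_gt0 a0 b0.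
  have := cU (l := a / (a + b)) _ _ Ua Ub.
  have -> : 1 - a / (a + b) = b / (a + b).
    by rewrite -{1}(mulfV (lt0r_neq0 ab0)) -mulrBl (addrC a b) addrK.
  rewrite !scalerA [X in X *: u]mulrAC [X in X *: v]mulrAC !mulfV ?gt_eqF // !mul1r -scalerDr; apply.
    by rewrite divr_ge0 // ltW.
  by rewrite ler_pdivrMr // mul1r lerDl ltW.
rewrite -lerBlDr; apply: lb_le_inf; first exact: gE_n0.
move=> a Ea; rewrite lerBlDr -lerBlDl; apply: lb_le_inf; first exact: gE_n0.
by move=> b Eb; rewrite lerBlDl; exact: key.
Qed.

Lemma gauge_out w : ~ U w -> 1 <= gauge w.
Proof.
move=> Uw; apply: lb_le_inf; first exact: gE_n0.
move=> s [s0 Us]; rewrite leNgt; apply/negP => s1; apply: Uw.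
have := cU (l := s) (ltW s0) (ltW s1) Us U0.
by rewrite scalerA mulfV ?gt_eqF // scale1r scaler0 addr0.
Qed.

Lemma gauge_in v : U v -> gauge v < 1.
Proof.
move=> Uv; have [e e0 He] := hU Uv.
pose d := e / (`|v| + 1).
have d0 : 0 < d by rewrite divr_gt0 // ltr_pwDr.
apply: (@le_lt_trans _ _ (1 + d)^-1).
  apply: gauge_le; split; first by rewrite invr_gt0 ltr_pwDr.
  rewrite invrK; apply: He; rewrite scalerDl scale1r opprD addrA subrr sub0r normrN normrZ.
  rewrite ger0_norm ?ltW // /d mulrAC ltr_pdivrMr ?ltr_pwDr // ltr_pM2l //; lra.
by rewrite invf_lt1 ?ltr_pwDr // ltrDl.
Qed.

End Gauge.

Section Sep.
Variables (R : realType) (n : nat).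

Lemma open_ball (U : set 'rV[R]_n) x : open U -> U x ->
  exists2 e : R, 0 < e & forall y, `|x - y| < e -> U y.
Proof.
move=> oU Ux.
have : nbhs x U by apply: open_nbhs_nbhs; split.
move=> /nbhs_ballP [e e0 H]; exists e => // y xy; apply: H.
by rewrite -ball_normE /=.
Qed.

Lemma convex_comb (U : set 'rV[R]_n) a b (l : R) : convex_set U ->
  0 <= l -> l <= 1 -> U a -> U b -> U (l *: a + (1 - l) *: b).
Proof.
move=> cU l0 l1 Ua Ub.
have := cU a b (Itv01 l0 l1) (mem_set Ua) (mem_set Ub).
by rewrite inE.
Qed.

Lemma linear_dotp (g : 'rV[R]_n -> R) :
  (forall u v, g (u + v) = g u + g v) -> (forall t u, g (t *: u) = t * g u) ->
  forall z, g z = dotp (\row_j g 'e_j) z.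
Proof.
move=> gD gZ z.
have g0 : g 0 = 0 by rewrite -(scale0r 0) gZ mul0r.
rewrite {1}(row_sum_delta z) (big_morph g gD g0) /dotp.
by apply: eq_bigr => j _; rewrite gZ mxE mulrC.
Qed.

Lemma separation (Om : set 'rV[R]_n) x y : open Om -> convex_set Om -> Om x -> ~ Om y ->
  exists nu : 'rV[R]_n, dotp nu (y - x) = 1 /\ forall z, Om z -> dotp nu (z - x) < 1.
Proof.
move=> oO cO Ox Oy.
pose U := [set u | Om (x + u)].
have hU u : U u -> exists2 e : R, 0 < e & forall y, `|u - y| < e -> U y.
  move=> Uu; have [e e0 He] := open_ball oO Uu; exists e => // y' h.
  by apply: He; rewrite /U opprD addrACA subrr add0r.
have cU a b (l : R) : 0 <= l -> l <= 1 -> U a -> U b -> U (l *: a + (1 - l) *: b).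
  move=> l0 l1 Ua Ub; have := convex_comb cO l0 l1 Ua Ub.
  have -> // : l *: (x + a) + (1 - l) *: (x + b) = x + (l *: a + (1 - l) *: b).
  by rewrite !scalerDr addrACA -scalerDl [l + _]addrC subrK scale1r.
have U0 : U 0 by rewrite /U /= addr0.
pose p := gauge U.
have pD := gaugeD hU cU U0.
have pZ := gaugeZ hU U0.
pose w := y - x.
have Uw : ~ U w by rewrite /U /w /= addrC subrK.
pose S0 := [set (0 : 'rV[R]_n)].
have sS0 : subsp S0.
  split; first by [].
  by split; [move=> u v -> ->; rewrite addr0 | move=> t u ->; rewrite scaler0].
have lf0 : linon S0 (fun _ => 0).
  by split; [move=> *; rewrite addr0 | move=> *; rewrite mulr0].
have nS0w : ~ S0 w by rewrite /S0 /= => w0; apply: Uw; rewrite w0.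
have p0 v : 0 <= p v by apply: gauge_ge0 hU U0 v.
have h1 v : S0 v -> (fun _ => 0) v <= p v by move=> _; exact: p0.
have h2 v : S0 v -> (fun _ => 0) v - p (v - w) <= 1.
  by move=> _; have := p0 (v - w); rewrite sub0r; lra.
have h3 v : S0 v -> 1 <= p (v + w) - (fun _ => 0) v.
  by move=> ->; rewrite add0r subr0; exact: gauge_out hU cU U0 _ Uw.
have [g0 [lg0 _ g0w g0p]] := ext_c pZ sS0 lf0 nS0w h1 h2 h3.
pose es : seq 'rV[R]_n := [seq 'e_j | j <- enum 'I_n].
have sS1 := subsp_ext w sS0.
have [g [[gD gZ] gg0 gp]] := hb_list pD pZ es sS1 lg0 g0p.
have T u : foldl ext (ext S0 w) es u.
  have sT := subsp_foldl es sS1; have [T0 [TD TZ]] := sT.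
  rewrite (row_sum_delta u); apply: (big_ind (fun v => foldl ext (ext S0 w) es v)) => //.
  move=> j _; apply: TZ; apply: mem_foldl => //.
  by apply/mapP; exists j => //; rewrite mem_enum.
have gD' u v : g (u + v) = g u + g v by apply: gD.
have gZ' t u : g (t *: u) = t * g u by apply: gZ.
exists (\row_j g 'e_j); split.
  by rewrite -linear_dotp // gg0 //; exact: mem_ext.
move=> z Oz; rewrite -linear_dotp //.
apply: le_lt_trans (gp _ (T _)) _; apply: (@gauge_in _ _ U hU (z - x)).
by rewrite /U /= addrC subrK.
Qed.
End Sep.

Section Ints.
Variable (R : realType).
Local Open Scope ereal_scope.
Lemma int_le (f g : R -> \bar R) : (forall t, 0 <= f t) -> (forall t, f t <= g t) ->
  \int[@lebesgue_measure R]_(t in [set: R]) f t <= \int[@lebesgue_measure R]_(t in [set: R]) g t.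
Proof.
move=> f0 fg; have g0 t : 0 <= g t by apply: le_trans (fg t).
rewrite !ge0_integralTE//; apply: ereal_sup_le => _ [h hf <-]; exists h => //.
by move=> t; apply: le_trans (fg t).
Qed.
Lemma iter_int_ge0 k (f : (nat -> R) -> \bar R) : (forall v, 0 <= f v) -> 0 <= iter_int k f.
Proof.
elim: k f => [|k IH] f f0 /=; first exact: f0.
by apply: integral_ge0 => t _; apply: IH.
Qed.
Lemma iter_int_le k (f g : (nat -> R) -> \bar R) : (forall v, 0 <= f v) -> (forall v, f v <= g v) ->
  iter_int k f <= iter_int k g.
Proof.
elim: k f g => [|k IH] f g f0 fg /=; first exact: fg.
apply: int_le => t; first by apply: iter_int_ge0.
by apply: IH.
Qed.
End Ints.
Section Ints2.
Variable (R : realType) (n : nat).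
Local Open Scope ereal_scope.
Lemma sphere_int_ge0 (f : 'rV[R]_n -> \bar R) : (forall v, 0 <= f v) -> 0 <= sphere_int f.
Proof.
move=> f0; rewrite /sphere_int; apply: mule_ge0.
  apply: iter_int_ge0 => v; apply: mule_ge0 => //; rewrite lee_fin; by rewrite indicE ler0n.
rewrite lee_fin invr_ge0; apply: fine_ge0; apply: iter_int_ge0 => v.
rewrite lee_fin; by rewrite indicE ler0n.
Qed.
Lemma sphere_int_le (f g : 'rV[R]_n -> \bar R) : (forall v, 0 <= f v) -> (forall v, f v <= g v) -> sphere_int f <= sphere_int g.
Proof.
move=> f0 fg; rewrite /sphere_int; apply: lee_wpmul2r.
  rewrite lee_fin invr_ge0; apply: fine_ge0; apply: iter_int_ge0 => v.
  rewrite lee_fin; by rewrite indicE ler0n.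
apply: iter_int_le => v; first by apply: mule_ge0 => //; rewrite lee_fin; by rewrite indicE ler0n.
apply: lee_wpmul2l => //; rewrite lee_fin; by rewrite indicE ler0n.
Qed.
End Ints2.

Section Dotp.
Variables (R : realType) (n : nat).
Implicit Types (u v w : 'rV[R]_n).

Lemma dotpDr w u v : dotp w (u + v) = dotp w u + dotp w v.
Proof. by rewrite /dotp -big_split; apply: eq_bigr => i _; rewrite mxE mulrDr. Qed.
Lemma dotpZr w t u : dotp w (t *: u) = t * dotp w u.
Proof. by rewrite /dotp mulr_sumr; apply: eq_bigr => i _; rewrite mxE mulrCA. Qed.
Lemma dotpNl w u : dotp (- w) u = - dotp w u.
Proof. by rewrite /dotp -sumrN; apply: eq_bigr => i _; rewrite mxE mulNr. Qed.
Lemma dotpNr w u : dotp w (- u) = - dotp w u.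
Proof. by rewrite -scaleN1r dotpZr mulN1r. Qed.
Lemma dotpBr w u v : dotp w (u - v) = dotp w u - dotp w v.
Proof. by rewrite dotpDr dotpNr. Qed.
Lemma dotp0r w : dotp w 0 = 0.
Proof. by rewrite -(scale0r 0) dotpZr mul0r. Qed.
Lemma dotp_ge0 u : 0 <= dotp u u.
Proof. by apply: sumr_ge0 => i _; rewrite -expr2 sqr_ge0. Qed.
Lemma dotp_gt0 u : u != 0 -> 0 < dotp u u.
Proof.
move=> u0; rewrite lt_def dotp_ge0 andbT; apply: contra u0 => /eqP h.
apply/eqP/rowP => i; rewrite mxE; apply/eqP.
have : 0 <= u ord0 i * u ord0 i <= 0.
  rewrite -expr2 sqr_ge0 /= -h /dotp (bigD1 i) //= lerDl.
  by apply: sumr_ge0 => j _; rewrite -expr2 sqr_ge0.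
by move=> h'; move: (h'); rewrite -eq_le eq_sym mulf_eq0 orbb.
Qed.
Lemma coord_le_sqrt u i : `|u ord0 i| <= Num.sqrt (dotp u u).
Proof.
rewrite -sqrtr_sqr ler_sqrt ?dotp_ge0 // /dotp (bigD1 i) //= expr2 lerDl.
by apply: sumr_ge0 => j _; rewrite -expr2 sqr_ge0.
Qed.
Lemma dotp_le w u : `|dotp w u| <= (\sum_i `|w ord0 i|) * Num.sqrt (dotp u u).
Proof.
rewrite mulr_suml; apply: le_trans (ler_norm_sum _ _ _) _; apply: ler_sum => i _.
by rewrite normrM ler_wpM2l ?coord_le_sqrt.
Qed.
End Dotp.

Section FH.
Variables (R : realType) (n m : nat) (a : multiidx n m -> R).
Hypothesis m0 : (0 < m)%N.
Hypothesis hpos : forall xi : 'rV[R]_n, xi != 0 -> 0 < Hsym a xi.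

Lemma FH_gt0 w : w != 0 -> 0 < FH a w.
Proof. by move=> w0; rewrite /FH powR_gt0 // hpos. Qed.

Lemma FH_exp w : w != 0 -> FH a w ^+ (2 * m) = Hsym a w.
Proof.
move=> w0; rewrite /FH -powR_mulrn ?powR_ge0 // -powRrM mulVf ?powRr1 //.
  exact/ltW/hpos.
by rewrite pnatr_eq0 muln_eq0 negb_or /= -lt0n m0.
Qed.

Definition Asum := \sum_(al : multiidx n m | (\sum_(i < n) (al i : nat) == 2 * m)%N) `|a al|.

Lemma Asum_ge0 : 0 <= Asum.
Proof. by apply: sumr_ge0 => *. Qed.

Lemma Hsym_le w : Hsym a w <= Asum * Num.sqrt (dotp w w) ^+ (2 * m).
Proof.
set s := Num.sqrt _.
apply: le_trans (ler_norm _) _; apply: le_trans (ler_norm_sum _ _ _) _.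
rewrite /Asum mulr_suml; apply: ler_sum => al /eqP hal.
rewrite normrM ler_wpM2l // normr_prod.
have -> : s ^+ (2 * m) = \prod_i s ^+ (al i : nat) by rewrite prodrXr hal.
apply: ler_prod => i _; rewrite normrX exprn_ge0 //=.
by apply: lerXn2r; rewrite ?nnegrE ?sqrtr_ge0 ?coord_le_sqrt.
Qed.

Lemma FH_le w : w != 0 -> FH a w <= (1 + Asum) * Num.sqrt (dotp w w).
Proof.
move=> w0; have A0 := Asum_ge0.
have m2 : (0 < 2 * m)%N by rewrite muln_gt0.
rewrite -(ler_pXn2r m2) ?nnegrE ?mulr_ge0 ?sqrtr_ge0 ?addr_ge0 //; last exact/ltW/FH_gt0.
rewrite FH_exp // exprMn; apply: le_trans (Hsym_le w) _.
apply: ler_wpM2r; first by rewrite exprn_ge0 ?sqrtr_ge0.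
apply: le_trans (ler_eXnr m2 _); first lra.
lra.
Qed.

Lemma FHstar_cases w : w != 0 ->
  FHstar a w = 0 \/ dotp w w / FH a w <= FHstar a w.
Proof.
move=> w0; rewrite /FHstar.
set E := [set _ | _ in _].
have [ub|nub] := pselect (has_ubound E).
  by right; apply: ub_le_sup => //; exists w.
by left; apply: sup_out => -[].
Qed.

Lemma FHstar_ge0 w : w != 0 -> 0 <= FHstar a w.
Proof.
move=> w0; case: (FHstar_cases w0) => [->//|]; apply: le_trans.
by rewrite divr_ge0 ?dotp_ge0 // ltW // FH_gt0.
Qed.

Lemma FHss_ub xi : has_ubound [set dotp xi om / FHstar a om | om in [set om | om != 0]].
Proof.
have A0 := Asum_ge0.
pose L := \sum_i `|xi ord0 i|.
have L0 : 0 <= L by apply: sumr_ge0.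
exists (L * (1 + Asum)) => _ [w /= w0 <-].
case: (FHstar_cases w0) => [->|h].
  by rewrite invr0 mulr0 mulr_ge0 //; lra.
have q0 := dotp_gt0 w0; have F0 := FH_gt0 w0.
have Fs0 : 0 < FHstar a w by apply: lt_le_trans h; rewrite divr_gt0.
rewrite ler_pdivrMr //; apply: le_trans (_ : _ <= L * (1 + Asum) * (dotp w w / FH a w)) _; last first.
  by rewrite ler_wpM2l // mulr_ge0 //; lra.
rewrite mulrA ler_pdivlMr //.
apply: le_trans (ler_norm _) _; rewrite normrM (gtr0_norm F0).
set s := Num.sqrt (dotp w w).
have ss : dotp w w = s * s by rewrite -expr2 sqr_sqrtr // dotp_ge0.
rewrite ss.
apply: le_trans (_ : _ <= L * s * ((1 + Asum) * s)) _.
  apply: ler_pM; rewrite ?normr_ge0 ?(ltW F0) //; first exact: dotp_le.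
  exact: FH_le.
by rewrite !mulrA (mulrAC L s).
Qed.

End FH.

Section Main.
Variables (R : realType) (n m : nat) (a : multiidx n m -> R).
Hypothesis m0 : (0 < m)%N.

Lemma even_ge0 (r : R) : 0 <= r ^+ (2 * m).
Proof. by rewrite exprM exprn_ge0 // sqr_ge0. Qed.

Lemma evenN (r : R) : (- r) ^+ (2 * m) = r ^+ (2 * m).
Proof. by rewrite !exprM sqrrN. Qed.

Lemma integrand_ge0 Om x w : (0 <= integrand a Om x w)%E.
Proof.
rewrite /integrand; case: (d_dir Om x w) => [r| |] //.
by rewrite lee_fin invr_ge0 even_ge0.
Qed.

Lemma ddir_fin (Om : set 'rV[R]_n) x w s0 : open Om -> Om x -> w != 0 ->
  ~ Om (x + s0 *: w) -> exists r, [/\ d_dir Om x w = r%:E, 0 < r & r <= `|s0|].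
Proof.
move=> oO Ox w0 ns0.
have [e e0 He] := open_ball oO Ox.
have up : (d_dir Om x w <= `|s0|%:E)%E by apply: ereal_inf_lbound; exists s0.
have lo : ((e / `|w|)%:E <= d_dir Om x w)%E.
  apply: le_ereal_inf_tmp => _ [s /= ns <-].
  rewrite lee_fin ler_pdivrMr ?normr_gt0 //.
  rewrite leNgt; apply/negP => h; apply: ns; apply: He.
  by rewrite opprD addrA subrr sub0r normrN normrZ.
move: up lo; case: (d_dir Om x w) => [r| |] //= up lo.
exists r; split => //.
by rewrite lee_fin in lo; apply: lt_le_trans lo; rewrite divr_gt0 ?normr_gt0.
Qed.

Lemma pointwise (Om : set 'rV[R]_n) x nu w : open Om -> Om x ->
  (forall z, Om z -> dotp nu (z - x) < 1) ->
  ((dotp nu w ^+ (2 * m) / FHstar a w ^+ (2 * m))%:E <= integrand a Om x w)%E.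
Proof.
move=> oO Ox hnu.
have [e0|e0] := eqVneq (dotp nu w) 0.
  by rewrite e0 expr0n muln_eq0 /= (negbTE (lt0n_neq0 m0)) mul0r integrand_ge0.
have w0 : w != 0 by apply: contra e0 => /eqP ->; rewrite dotp0r.
have ns0 : ~ Om (x + (dotp nu w)^-1 *: w).
  move=> h; have := hnu _ h; rewrite addrAC subrr add0r dotpZr mulVf //; lra.
have [r [dE r0 rle]] := ddir_fin oO Ox w0 ns0.
rewrite /integrand dE lee_fin.
set F := FHstar a w.
have [->|F0] := eqVneq F 0.
  by rewrite expr0n muln_eq0 /= (negbTE (lt0n_neq0 m0)) invr0 mulr0 invr_ge0 even_ge0.
have P0 : 0 < F ^+ (2 * m) by rewrite lt_def even_ge0 andbT expf_eq0 negb_and (negbTE F0) orbT.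
have Q0 : 0 < r ^+ (2 * m) by rewrite exprn_gt0.
have EQ : dotp nu w ^+ (2 * m) * r ^+ (2 * m) <= 1.
  rewrite -exprMn exprM; apply: exprn_ile1; first exact: sqr_ge0.
  rewrite -[leLHS]ger0_norm ?sqr_ge0 // normrX; apply: exprn_ile1; first exact: normr_ge0.
  rewrite normrM (gtr0_norm r0); apply: le_trans (ler_wpM2l (normr_ge0 (dotp nu w)) rle) _.
  by rewrite normrV ?unitfE // mulfV ?normr_eq0.
rewrite exprMn invfM [leLHS]mulrC ler_pM2l ?invr_gt0 // -[leRHS]div1r ler_pdivlMr //.
Qed.
End Main.

Lemma root_exp (R : realType) (z : R) k : (0 < k)%N -> 0 <= z -> (z `^ (k%:R^-1)) ^+ k = z.
Proof.
move=> k0 z0; rewrite -powR_mulrn ?powR_ge0 // -powRrM mulVf ?powRr1 //.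
by rewrite pnatr_eq0 -lt0n.
Qed.

Lemma final_step (R : realType) (T : set R) (mu j : R) k : (0 < k)%N -> T !=set0 ->
  (forall t, T t -> 0 < t) -> 0 <= j -> (forall t, T t -> mu <= j * t ^+ k) ->
  mu / (inf T) ^+ k <= j.
Proof.
move=> k0 Tn Tpos j0 hT.
have d0 : 0 <= inf T by apply: lb_le_inf => // t /Tpos /ltW.
have [->|dn0] := eqVneq (inf T) 0.
  by rewrite expr0n (negbTE (lt0n_neq0 k0)) invr0 mulr0.
have dp : 0 < inf T by rewrite lt_def dn0 d0.
have dk : 0 < inf T ^+ k by rewrite exprn_gt0.
rewrite ler_pdivrMr //; rewrite leNgt; apply/negP => hlt.
have [t0 Tt0] := Tn.
have [jz|jp] := eqVneq j 0.
  by have := hT _ Tt0; move: hlt; rewrite jz !mul0r => h1 h2; lra.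
have jp' : 0 < j by rewrite lt_def jp j0.
have q0 : 0 <= mu / j.
  by rewrite divr_ge0 //; apply: le_trans (ltW hlt); rewrite mulr_ge0 // ltW.
set u := (mu / j) `^ (k%:R^-1).
have uk : u ^+ k = mu / j by apply: root_exp.
have u0 : 0 <= u by apply: powR_ge0.
have du : inf T < u.
  rewrite ltNge; apply/negP => ud.
  have : u ^+ k <= inf T ^+ k by apply: lerXn2r; rewrite ?nnegrE.
  rewrite uk ler_pdivrMr // mulrC => h; lra.
have [t Tt tu] := inf_lt Tn du.
have : t ^+ k < u ^+ k by rewrite ltr_pXn2r ?nnegrE ?(ltW (Tpos _ Tt)).
rewrite uk ltr_pdivlMr // mulrC => h; have := hT _ Tt; lra.
Qed.

Lemma bdry_notin (R : realType) n (Om : set 'rV[R]_n) y : open Om -> bdry Om y -> ~ Om y.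
Proof.
move=> oO [_ cy] Oy.
have [z [nz Oz]] := cy Om (open_nbhs_nbhs (conj oO Oy)).
exact: nz.
Qed.

Theorem mainTheorem5 (R : realType) (n m : nat) (a : multiidx n m -> R)
    (Omega : set 'rV[R]_n) :
  (0 < m)%N ->
  (forall xi : 'rV[R]_n, xi != 0 -> 0 < Hsym a xi) ->
  open Omega -> convex_set Omega -> bdry Omega !=set0 ->
  forall x : 'rV[R]_n, Omega x ->
    ((muH a / dH a Omega x ^+ (2 * m))%:E <=
     sphere_int (integrand a Omega x))%E.
Proof.
move=> m0 hpos oO cO bn x Ox.
have J0 : (0 <= sphere_int (integrand a Omega x))%E.
  by apply: sphere_int_ge0 => w; exact: integrand_ge0.
move: J0; case EJ: (sphere_int (integrand a Omega x)) => [j| |] //= J0; last by rewrite leey.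
rewrite lee_fin; rewrite lee_fin in J0.
have xy0 y : bdry Omega y -> x - y != 0.
  move=> hy; rewrite subr_eq0; apply/eqP => xy; apply: (bdry_notin oO hy); by rewrite -xy.
have key y : bdry Omega y -> 0 < FHstar a (x - y) ->
    muH a <= j * FHstar a (x - y) ^+ (2 * m).
  move=> hy t0; set t := FHstar a (x - y).
  have [nu [nu1 nuz]] := separation oO cO Ox (bdry_notin oO hy).
  pose xi := - nu.
  have Ixi : (sphere_int (fun om => (dotp xi om ^+ (2 * m) / FHstar a om ^+ (2 * m))%:E)
      <= j%:E)%E.
    rewrite -EJ; apply: sphere_int_le => w.
      by rewrite lee_fin mulr_ge0 ?invr_ge0 ?even_ge0.
    by rewrite /xi dotpNl evenN; exact: pointwise.
  have Fss : t^-1 <= FHstarstar a xi.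
    apply: ub_le_sup; first exact: FHss_ub.
    exists (x - y) => //=; first exact: xy0.
    by rewrite /xi dotpNl -dotpNr opprB nu1 div1r.
  rewrite /muH; set S := [set c | _].
  have [Sn|Sn] := pselect (S !=set0); last first.
    have -> : S = set0 by apply/seteqP; split => // c Sc; apply: Sn; exists c.
    by rewrite sup0 mulr_ge0 // even_ge0.
  apply: ge_sup => // c Sc.
  have := le_trans (Sc xi) Ixi; rewrite lee_fin => h.
  have [c0|c0] := lerP c 0.
    by apply: le_trans c0 _; rewrite mulr_ge0 // even_ge0.
  have tk : 0 < t ^+ (2 * m) by rewrite exprn_gt0.
  have : c / t ^+ (2 * m) <= j.
    apply: le_trans h; rewrite ler_wpM2l ?(ltW c0) // -exprVn.
    have F0 : 0 <= FHstarstar a xi by apply: le_trans Fss; rewrite invr_ge0 ltW.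
    by apply: lerXn2r; rewrite ?nnegrE ?invr_ge0 ?(ltW t0).
  by rewrite ler_pdivrMr.
set T := [set FHstar a (x - y) | y in bdry Omega].
have Tn : T !=set0 by have [y hy] := bn; exists (FHstar a (x - y)), y.
have T0 t : T t -> 0 <= t by move=> [y hy <-]; apply: FHstar_ge0 => //; exact: xy0.
have [[t [y hy tE] t0]|] := pselect (exists2 t, T t & t = 0).
  have -> : dH a Omega x = 0.
    apply/eqP; rewrite eq_le; apply/andP; split.
      by rewrite -t0; apply: ge_inf; [exists 0 => s /T0 | exists y].
    by apply: lb_le_inf.
  by rewrite expr0n muln_eq0 /= (negbTE (lt0n_neq0 m0)) invr0 mulr0.
move=> nz; apply: final_step => //; first by rewrite muln_gt0.
  move=> t Tt; rewrite lt_def T0 // andbT; apply/eqP => t0; apply: nz; by exists t.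
move=> _ [y hy <-]; apply: key => //.
rewrite lt_def FHstar_ge0 ?xy0 // andbT; apply/eqP => t0; apply: nz.
by exists (FHstar a (x - y)) => //; exists y.
Qed.
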